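(* Let $G$ be a complete geometric graph and let $B$ be a blocker for $\mathcal{T}_{\leq 3}(G)$. Let $a,b$ be two leaves of $B$ with leaf edges $[a,c]$ and $[b,d]$, respectively. If $a,b,c,d$ are mutually distinct, then $a,b,d,c$ are in convex position and, in this cyclic order, are the vertices of a convex quadrilateral (i.e., its sides are $[a,b],[b,d],[d,c],[c,a]$).
   Context: A geometric graph is a graph whose vertices are points in the plane in general position (no three collinear) and whose edges are straight segments between pairs of vertices; $G$ is complete if all pairs of vertices are joined. $\mathcal{T}_{\leq k}(G)$ denotes the family of all simple (non-crossing) spanning trees of $G$ of (graph) diameter at most $k$. A subgraph $B$ blocks a family $\mathcal{F}$ of subgraphs if it shares at least one edge with every member of $\mathcal{F}$; a blocker of $\mathcal{F}$ is a subgraph that blocks $\mathcal{F}$ and has the smallest possible number of edges among all subgraphs blocking $\mathcal{F}$. A leaf of $B$ is a vertex of degree 1 in $B$, and its leaf edge is the unique edge of $B$ containing it. *)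

(* Defs.v *)
From HB Require Import structures.
From mathcomp Require Import all_boot all_order all_algebra.
Set Implicit Arguments. Unset Strict Implicit. Unset Printing Implicit Defensive.
Import Order.TTheory GRing.Theory Num.Theory.
Local Open Scope ring_scope.

Section GeomGraph.
Variable R : realFieldType.
Variable T : finType.
Variable p : T -> R * R.

Definition orient (u v w : R * R) : R :=
  (v.1 - u.1) * (w.2 - u.2) - (v.2 - u.2) * (w.1 - u.1).

Definition general_position : Prop :=
  injective p /\
  forall x y z : T, x != y -> y != z -> x != z -> orient (p x) (p y) (p z) != 0.

Definition edgesG : {set {set T}} := [set e : {set T} | #|e| == 2%N].
Definition subgraph (H : {set {set T}}) : Prop := H \subset edgesG.

Definition adj (H : {set {set T}}) : rel T := fun u v => (u != v) && ([set u; v] \in H).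

Definition segs_meet (x y z w : T) : Prop :=
  exists t s : R, [/\ 0 <= t <= 1, 0 <= s <= 1 &
    ((1 - t) * (p x).1 + t * (p y).1 = (1 - s) * (p z).1 + s * (p w).1 /\
     (1 - t) * (p x).2 + t * (p y).2 = (1 - s) * (p z).2 + s * (p w).2)].

(* simple = no two edges with disjoint endpoints cross *)
Definition noncrossing (H : {set {set T}}) : Prop :=
  forall x y z w : T, [set x; y] \in H -> [set z; w] \in H ->
    x != y -> z != w -> x != z -> x != w -> y != z -> y != w ->
    ~ segs_meet x y z w.

Definition connected (H : {set {set T}}) : Prop :=
  forall u v : T, connect (adj H) u v.

Definition acyclic (H : {set {set T}}) : Prop :=
  forall s : seq T, (3 <= size s)%N -> uniq s -> ~~ cycle (adj H) s.

Definition spanning_tree (H : {set {set T}}) : Prop :=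
  subgraph H /\ connected H /\ acyclic H.

Definition diam_le (H : {set {set T}}) (k : nat) : Prop :=
  forall u v : T, exists s : seq T,
    [/\ path (adj H) u s, last u s = v & (size s <= k)%N].

Definition simple_trees_diam_le (k : nat) (H : {set {set T}}) : Prop :=
  spanning_tree H /\ noncrossing H /\ diam_le H k.

Definition blocks (B : {set {set T}}) (F : {set {set T}} -> Prop) : Prop :=
  forall H, F H -> exists2 e, e \in B & e \in H.

Definition blocker (B : {set {set T}}) (F : {set {set T}} -> Prop) : Prop :=
  [/\ subgraph B, blocks B F &
      forall B', subgraph B' -> blocks B' F -> (#|B| <= #|B'|)%N].

Definition leaf (B : {set {set T}}) (a : T) : Prop :=
  #|[set e in B | a \in e]| = 1%N.

Definition convex_quad (x1 x2 x3 x4 : T) : Prop :=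
  let o := orient in
  (0 < o (p x1) (p x2) (p x3) /\ 0 < o (p x2) (p x3) (p x4) /\
   0 < o (p x3) (p x4) (p x1) /\ 0 < o (p x4) (p x1) (p x2)) \/
  (o (p x1) (p x2) (p x3) < 0 /\ o (p x2) (p x3) (p x4) < 0 /\
   o (p x3) (p x4) (p x1) < 0 /\ o (p x4) (p x1) (p x2) < 0).

End GeomGraph.

(* Main.v *)
Require Import Defs.
From HB Require Import structures.
From mathcomp Require Import all_boot all_order all_algebra ring lra zify.
Import Order.TTheory GRing.Theory Num.Theory.
Set Implicit Arguments. Unset Strict Implicit. Unset Printing Implicit Defensive.

Section Alg.
Local Open Scope ring_scope.
Variable R : realFieldType.
Implicit Types u v w P Q : R * R.

Lemma orient_cyc u v w : orient u v w = orient v w u.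
Proof. rewrite /orient; ring. Qed.
Lemma orient_swap u v w : orient u w v = - orient u v w.
Proof. rewrite /orient; ring. Qed.
Lemma orient_aa u v : orient u v u = 0.
Proof. rewrite /orient; ring. Qed.
Lemma orient_bb u v : orient u v v = 0.
Proof. rewrite /orient; ring. Qed.
Lemma orient_comb u v P Q (t : R) :
  orient u v ((1-t)*P.1 + t*Q.1, (1-t)*P.2 + t*Q.2) = (1-t)*orient u v P + t * orient u v Q.
Proof. rewrite /orient /=; ring. Qed.
Lemma ident (a b c x y : R * R) :
  orient b y c * orient a b x + orient b c x * orient a b y + orient b x y * orient a b c = 0.
Proof. rewrite /orient; ring. Qed.
Lemma sg (P Q S Fx Fy s : R) : P*Fx + Q*Fy + S*s = 0 ->
  0 < s*P -> 0 < s*Q -> 0 < s*Fx -> 0 < s*Fy -> s*S < 0.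
Proof. move=> *. nra. Qed.
Lemma pp (s x y : R) : 0 < s*x -> 0 < s*y -> 0 < x*y.
Proof. move=> *; nra. Qed.
Lemma pn (s x y : R) : 0 < s*x -> s*y < 0 -> x*y < 0.
Proof. move=> *; nra. Qed.
Lemma sgn_split (x : R) : x != 0 -> x < 0 \/ 0 < x.
Proof. by move=> /lt_total /orP[h|h]; [left|right]. Qed.
Lemma sq_pos (x : R) : x != 0 -> 0 < x * x.
Proof. by move=> /sgn_split[h|h]; nra. Qed.
Lemma comb (s A C : R) : 0 <= s <= 1 -> 0 < A * C -> (1-s)*A + s*C != 0.
Proof. move=> /andP[h1 h2] h. apply/eqP => E.
have [s0|sn0] := eqVneq s 0.
  move: E h; rewrite s0 subr0 mul1r mul0r addr0 => ->; rewrite mul0r ltxx //.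
have sp : 0 < s by rewrite lt_def sn0 h1.
have [Ap|An] := ltP 0 A.
  have Cp : 0 < C by rewrite -(pmulr_rgt0 _ Ap).
  have : 0 < s * C by apply: mulr_gt0.
  have : 0 <= (1-s)*A by apply: mulr_ge0; lra.
  lra.
have An' : A < 0. rewrite lt_def An andbT. apply/eqP=> A0; move: h; rewrite -A0 mul0r ltxx //.
have Cn : C < 0 by rewrite -(nmulr_rgt0 _ An').
  have : s * C < 0 by rewrite pmulr_rlt0.
  have : (1-s)*A <= 0 by apply: mulr_ge0_le0; lra.
  lra.
Qed.
End Alg.

Section Geo.
Local Open Scope ring_scope.
Variables (R : realFieldType) (T : finType) (p : T -> R * R).

Lemma sm_sym1 x y z w : segs_meet p x y z w -> segs_meet p y x z w.
Proof.
case=> t [s [/andP[t0 t1] hs [e1 e2]]]; exists (1-t), s; split => //.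
  apply/andP; split; lra.
split; [rewrite -e1|rewrite -e2]; ring.
Qed.
Lemma sm_sym2 x y z w : segs_meet p x y z w -> segs_meet p z w x y.
Proof.
case=> t [s [ht hs [e1 e2]]]; exists s, t; split => //.
Qed.
Lemma sm_sym3 x y z w : segs_meet p x y z w -> segs_meet p x y w z.
Proof. by move=> /sm_sym2 /sm_sym1 /sm_sym2. Qed.

Lemma meet_orient x y z w : segs_meet p x y z w -> exists t s,
  [/\ 0 <= t <= 1, 0 <= s <= 1,
   (forall u v, (1-t)*orient u v (p x) + t*orient u v (p y) =
                (1-s)*orient u v (p z) + s*orient u v (p w)) &
   ((1-t)*(p x).1 + t*(p y).1 = (1-s)*(p z).1 + s*(p w).1 /\
    (1-t)*(p x).2 + t*(p y).2 = (1-s)*(p z).2 + s*(p w).2)].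
Proof.
case=> t [s [ht hs [e1 e2]]]; exists t, s; split => // u v.
by rewrite -!orient_comb e1 e2.
Qed.

Lemma no_meet a b x y : injective p -> a != b ->
  orient (p a) (p b) (p x) * orient (p a) (p b) (p y) < 0 \/
  orient (p a) (p b) (p x) * orient (p a) (p x) (p y) < 0 \/
  0 < orient (p a) (p b) (p y) * orient (p b) (p y) (p x) ->
  ~ segs_meet p a x b y.
Proof.
move=> inj ab H /meet_orient [t [s [ht hs E [c1 c2]]]].
case: H => [H|[H|H]].
- have := E (p a) (p b); rewrite orient_aa orient_bb !mulr0 !add0r => E1.
  set fx := orient (p a) (p b) (p x) in H E1.
  set fy := orient (p a) (p b) (p y) in H E1.
  have fx0 : fx != 0 by apply/eqP => h; move: H; rewrite h mul0r ltxx.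
  have fy0 : fy != 0 by apply/eqP => h; move: H; rewrite h mulr0 ltxx.
  move: ht hs => /andP[t0 t1] /andP[s0 s1].
  have hsx := sq_pos fx0. have hsy := sq_pos fy0.
  have tz : t = 0.
    have h1 : t * (fx*fx) = s * (fx*fy) by rewrite mulrA E1; ring.
    have h2 : s * (fx*fy) <= 0 by apply: mulr_ge0_le0 => //; apply: ltW.
    have h3 : 0 <= t * (fx * fx) by apply: mulr_ge0 => //; apply: ltW.
    have : t * (fx*fx) == 0 by apply/eqP; lra.
    by rewrite mulf_eq0 (negbTE (lt0r_neq0 hsx)) orbF => /eqP.
  have sz : s = 0.
    have h1 : s * (fy*fy) = t * (fx*fy) by rewrite mulrA -E1; ring.
    have h2 : t * (fx*fy) <= 0 by apply: mulr_ge0_le0 => //; apply: ltW.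
    have h3 : 0 <= s * (fy * fy) by apply: mulr_ge0 => //; apply: ltW.
    have : s * (fy*fy) == 0 by apply/eqP; lra.
    by rewrite mulf_eq0 (negbTE (lt0r_neq0 hsy)) orbF => /eqP.
  move: c1 c2; rewrite tz sz subr0 !mul1r !mul0r !addr0 => c1 c2.
  move/eqP: ab; apply; apply: inj.
  move: c1 c2; case: (p a) => ? ?; case: (p b) => ? ? /= -> -> //.
- have := E (p a) (p x); rewrite orient_aa orient_bb !mulr0 !addr0.
  rewrite orient_swap => E1.
  have := comb hs (A := - orient (p a) (p b) (p x)) (C := orient (p a) (p x) (p y)).
  by rewrite mulNr oppr_gt0 H -E1 eqxx => /(_ isT).
- have := E (p b) (p y); rewrite orient_aa orient_bb !mulr0 !addr0.
  rewrite -orient_cyc => E1.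
  have := comb ht (A := orient (p a) (p b) (p y)) (C := orient (p b) (p y) (p x)).
  by rewrite H E1 eqxx => /(_ isT).
Qed.
End Geo.

Section Construct.
Local Open Scope ring_scope.
Variables (R : realFieldType) (T : finType) (p : T -> R * R) (a b c d : T).
Hypothesis gp : general_position p.
Hypotheses (ab : a != b) (ac : a != c) (ad : a != d) (bc : b != c) (bd : b != d) (cd : c != d).
Local Notation "[O u , v , w ]" := (orient (p u) (p v) (p w)).
Hypothesis cond : [O a,b,c]*[O a,b,d] < 0 \/
  (0 < [O a,b,c]*[O a,b,d] /\ 0 < [O a,b,c]*[O b,c,d]).

Lemma Onz u v w : u != v -> v != w -> u != w -> [O u,v,w] != 0.
Proof. by move=> *; apply: gp.2. Qed.

Definition inB y : bool :=
  if [O a,b,c]*[O a,b,d] < 0 then 0 < [O a,b,c]*[O a,b,y]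
  else (y == c) || ((0 < [O a,b,c]*[O a,b,y]) && (0 < [O a,b,c]*[O b,y,c])).

Lemma fc0 : [O a,b,c] != 0. Proof. exact: Onz. Qed.

Lemma inB_c : inB c.
Proof. rewrite /inB eqxx orTb; case: ifP => // _; exact: sq_pos fc0. Qed.

Lemma inB_d : ~~ inB d.
Proof.
rewrite /inB; case: ifP => h; first by rewrite -leNgt ltW.
rewrite eq_sym (negbTE cd) /=.
case: cond => [h'|[_ h']]; first by rewrite h' in h.
by rewrite (orient_swap (p b) (p c) (p d)) mulrN oppr_gt0 (lt_gtF h') andbF.
Qed.

Lemma cross x y : x != a -> x != b -> y != a -> y != b -> ~~ inB x -> inB y ->
  ~ segs_meet p a x b y.
Proof.
move=> xa xb ya yb nx iy.
have fx0 : [O a,b,x] != 0 by apply: Onz; rewrite // eq_sym.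
have fy0 : [O a,b,y] != 0 by apply: Onz; rewrite // eq_sym.
apply: (no_meet gp.1 ab).
move: nx iy; rewrite /inB; case: ifP => hcd.
- move=> nx iy; left.
  have hx : [O a,b,c]*[O a,b,x] < 0.
    by case/sgn_split: (mulf_neq0 fc0 fx0) => // h; rewrite h in nx.
  rewrite mulrC; exact: pn iy hx.
- rewrite negb_or => /andP[xc nx] iy.
  have fcy : 0 < [O a,b,c]*[O a,b,y].
    by case/orP: iy => [/eqP->|/andP[]//]; exact: sq_pos fc0.
  case/sgn_split: (mulf_neq0 fc0 fx0) => hx.
    by left; rewrite mulrC; exact: pn fcy hx.
  rewrite hx /= in nx.
  have hbxc : [O a,b,c]*[O b,x,c] < 0.
    have := @Onz b x c; rewrite eq_sym xb xc bc => /(_ isT isT isT) h0.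
    by case/sgn_split: (mulf_neq0 fc0 h0) => // h; rewrite h in nx.
  have hbcx : 0 < [O a,b,c]*[O b,c,x].
    by rewrite (orient_swap (p b) (p x) (p c)) mulrN oppr_gt0.
  right; right.
  have key : 0 < [O a,b,c] * [O b,y,x].
    case/orP: iy => [/eqP->|/andP[_ hyc]] //.
    have := sg (ident (p a) (p b) (p c) (p x) (p y)) hyc hbcx hx fcy.
    by rewrite (orient_swap (p b) (p x) (p y)) mulrN oppr_gt0.
  exact: pp fcy key.
Qed.

Definition g u := if u == a then b else if u == b then a else if inB u then b else a.
Definition H : {set {set T}} := [set e : {set T} | [exists u, e == [set u; g u]]].

Lemma g_ab u : g u = a \/ g u = b.
Proof. rewrite /g; case: ifP => _; [by right|]; case: ifP => _; [by left|]; case: ifP => _; auto. Qed.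
Lemma g_neq u : u != g u.
Proof.
rewrite /g; case: ifP => [/eqP->|ua] //.
case: ifP => [/eqP->|ub]; first by rewrite eq_sym.
by case: ifP; rewrite ?ua ?ub.
Qed.
Lemma g_a : g a = b. Proof. by rewrite /g eqxx. Qed.
Lemma g_b : g b = a. Proof. by rewrite /g eq_sym (negbTE ab) eqxx. Qed.
Lemma g_in u : u != a -> u != b -> g u = if inB u then b else a.
Proof. by move=> ua ub; rewrite /g (negbTE ua) (negbTE ub). Qed.
Lemma g_c : g c = b. Proof. have h := g_in (u:=c). rewrite h ?inB_c // eq_sym //. Qed.
Lemma g_d : g d = a. Proof. by rewrite g_in ?(negbTE inB_d) // eq_sym. Qed.

Lemma edgeP x y : x != y -> [set x; y] \in H ->
  exists u, (x = u /\ y = g u) \/ (x = g u /\ y = u).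
Proof.
move=> xy; rewrite inE => /existsP [u /eqP E].
have hx : x \in [set u; g u] by rewrite -E set21.
have hy : y \in [set u; g u] by rewrite -E set22.
move: hx hy; rewrite !inE => /orP[/eqP hx|/eqP hx] /orP[/eqP hy|/eqP hy];
  exists u; subst; auto; by rewrite eqxx in xy.
Qed.

Lemma adj_g u : adj H u (g u).
Proof. by rewrite /adj g_neq /= inE; apply/existsP; exists u. Qed.
Lemma adj_sym u v : adj H u v = adj H v u.
Proof. by rewrite /adj eq_sym setUC. Qed.
Lemma adj_leaf x z : x != a -> x != b -> adj H x z -> z = g x.
Proof.
move=> xa xb /andP[xz /(edgeP xz)] [u [[-> ->]|[hx hz]]] //.
by case: (g_ab u) => h; rewrite -hx in h; [rewrite h eqxx in xa|rewrite h eqxx in xb].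
Qed.

Definition cen u := if (u == a) || (u == b) then u else g u.
Lemma cen_ab u : cen u = a \/ cen u = b.
Proof. rewrite /cen; case: ifP => [/orP[/eqP|/eqP]|_]; auto; exact: g_ab. Qed.
Lemma adj_cen u : u != cen u -> adj H u (cen u).
Proof. by rewrite /cen; case: ifP => _; [rewrite eqxx|move=> _; exact: adj_g]. Qed.
Lemma adj_ab : adj H a b. Proof. by have := adj_g a; rewrite g_a. Qed.
Lemma adj_cen2 u v : cen u != cen v -> adj H (cen u) (cen v).
Proof.
case: (cen_ab u) (cen_ab v) => -> [] ->; rewrite ?eqxx //.
- by move=> _; exact: adj_ab.
- by move=> _; rewrite adj_sym; exact: adj_ab.
Qed.

Lemma step x y : x = y \/ adj H x y ->
  exists s, [/\ path (adj H) x s, last x s = y & (size s <= 1)%N].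
Proof. by case=> [->|h]; [exists [::]|exists [:: y]; rewrite /= h]. Qed.

Lemma H_diam : diam_le H 3.
Proof.
move=> u v.
have [s1 [p1 l1 z1]] : exists s, [/\ path (adj H) u s, last u s = cen u & (size s <= 1)%N].
  apply: step; case: (eqVneq u (cen u)) => h0; [by left|right; exact: adj_cen].
have [s2 [p2 l2 z2]] : exists s, [/\ path (adj H) (cen u) s, last (cen u) s = cen v & (size s <= 1)%N].
  apply: step; case: (eqVneq (cen u) (cen v)) => h0; [by left|right; exact: adj_cen2].
have [s3 [p3 l3 z3]] : exists s, [/\ path (adj H) (cen v) s, last (cen v) s = v & (size s <= 1)%N].
  apply: step; case: (eqVneq v (cen v)) => h0; [by left|right; rewrite adj_sym; exact: adj_cen].
exists (s1 ++ s2 ++ s3); split.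
- by rewrite !cat_path p1 l1 p2 l2 p3.
- by rewrite !last_cat l1 l2 l3.
- by rewrite !size_cat; lia.
Qed.

Lemma H_acyclic : acyclic H.
Proof.
move=> s hs us; apply/negP => cs.
have [x xs hx] : exists2 x, x \in s & (x != a) && (x != b).
  have : ~~ all (fun x => (x == a) || (x == b)) s.
    apply/negP => /allP hall.
    have : (size s <= 2)%N.
      by apply: (uniq_leq_size (s2 := [:: a; b]) us) => z /hall; rewrite !inE.
    lia.
  by case/allPn => x xs; rewrite negb_or => hx; exists x.
case/andP: hx => xa xb.
case: (rot_to xs) => i s' e.
have cs' : cycle (adj H) (x :: s') by rewrite -e rot_cycle.
have us' : uniq (x :: s') by rewrite -e rot_uniq.
have ss' : (3 <= size (x :: s'))%N by rewrite -e size_rot.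
case: s' e cs' us' ss' => [|y [|z s'']] // _ cs' us' ss'.
move: cs'; rewrite /cycle rcons_path => /andP[/andP[hxy _] hl].
have e1 := adj_leaf xa xb hxy.
rewrite adj_sym in hl.
have e2 := adj_leaf xa xb hl.
move: us' => /andP[_ /andP[ys _]].
have : last x [:: y, z & s''] \in z :: s'' by have := mem_last z s''.
by rewrite e2 -e1 (negbTE ys).
Qed.

Lemma H_final u1 u2 : g u1 != g u2 -> u1 != g u2 -> u2 != g u1 ->
  ~ segs_meet p u1 (g u1) u2 (g u2).
Proof.
move=> h12 h1 h2.
have n1 := g_neq u1; have n2 := g_neq u2.
case: (g_ab u1) => e1; case: (g_ab u2) => e2;
  rewrite e1 e2 in h12 h1 h2 n1 n2 *; rewrite ?eqxx // in h12.
- have nb1 : ~~ inB u1.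
    by move: e1; rewrite g_in //; case: ifP => // _ /eqP; rewrite eq_sym (negbTE ab).
  have ib2 : inB u2.
    by move: e2; rewrite g_in //; case: ifP => // _ /eqP; rewrite (negbTE ab).
  by move=> /sm_sym1 /sm_sym3; apply: cross; rewrite // eq_sym.
- have nb2 : ~~ inB u2.
    by move: e2; rewrite g_in //; case: ifP => // _ /eqP; rewrite eq_sym (negbTE ab).
  have ib1 : inB u1.
    by move: e1; rewrite g_in //; case: ifP => // _ /eqP; rewrite (negbTE ab).
  by move=> /sm_sym2 /sm_sym1 /sm_sym3; apply: cross; rewrite // eq_sym.
Qed.

Lemma H_noncross : noncrossing p H.
Proof.
move=> x y z w exy ezw xy zw xz xw yz yw hm.
have [u1 h1] := edgeP xy exy; have [u2 h2] := edgeP zw ezw.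
case: h1 h2 hm xy zw xz xw yz yw => [[-> ->]|[-> ->]] [[-> ->]|[-> ->]] hm xy zw xz xw yz yw.
- by apply: (H_final yw xw); rewrite // eq_sym.
- by apply: (H_final yz xz); [rewrite eq_sym|apply: sm_sym3].
- by apply: (H_final xw yw); [rewrite eq_sym|apply: sm_sym1].
- by apply: (H_final xz yz); [rewrite eq_sym|apply: sm_sym3; apply: sm_sym1].
Qed.

Lemma H_tree : simple_trees_diam_le p 3 H.
Proof.
split; [split; [|split]|split].
- by apply/subsetP => e; rewrite inE => /existsP[u /eqP ->]; rewrite inE cards2 g_neq.
- move=> u v; have [s [ps ls _]] := H_diam u v; apply/connectP; exists s => //.
- exact: H_acyclic.
- exact: H_noncross.
- exact: H_diam.
Qed.

Lemma leaf_eq (B : {set {set T}}) v e1 e2 : leaf B v -> e1 \in B -> e2 \in B ->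
  v \in e1 -> v \in e2 -> e1 = e2.
Proof.
rewrite /leaf => /eqP /cards1P [z hz] h1 h2 v1 v2.
have : e1 \in [set e in B | v \in e] by rewrite inE h1 v1.
have : e2 \in [set e in B | v \in e] by rewrite inE h2 v2.
by rewrite hz => /set1P -> /set1P ->.
Qed.

Lemma no_block (B : {set {set T}}) : leaf B a -> [set a; c] \in B ->
  leaf B b -> [set b; d] \in B -> ~ blocks B (simple_trees_diam_le p 3).
Proof.
move=> la acB lb bdB hb; have [e eB] := hb _ H_tree.
rewrite inE => /existsP [u /eqP E]; subst e.
case: (g_ab u) => gu.
- have ha : a \in [set u; g u] by rewrite gu set22.
  have E := leaf_eq la acB eB (set21 _ _) ha.
  have : u \in [set a; c] by rewrite E set21.
  rewrite !inE => /orP[/eqP ua|/eqP uc].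
    by have := g_neq u; rewrite gu ua eqxx.
  by move: gu; rewrite uc g_c => /eqP; rewrite eq_sym (negbTE ab).
- have hb' : b \in [set u; g u] by rewrite gu set22.
  have E := leaf_eq lb bdB eB (set21 _ _) hb'.
  have : u \in [set b; d] by rewrite E set21.
  rewrite !inE => /orP[/eqP ub|/eqP ud].
    by have := g_neq u; rewrite gu ub eqxx.
  by move: gu; rewrite ud g_d => /eqP; rewrite (negbTE ab).
Qed.

End Construct.

Local Open Scope ring_scope.
Theorem corollary1 (R : realFieldType) (T : finType) (p : T -> R * R)
  (B : {set {set T}}) (a b c d : T) :
  general_position p ->
  blocker B (simple_trees_diam_le p 3) ->
  leaf B a -> [set a; c] \in B ->
  leaf B b -> [set b; d] \in B ->
  [&& a != b, a != c, a != d, b != c, b != d & c != d] ->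
  convex_quad p a b d c.
Proof.
move=> gp [_ blk _] la acB lb bdB /andP[ab /andP[ac /andP[ad /andP[bc /andP[bd cd]]]]].
have nz : forall u v w, u != v -> v != w -> u != w -> orient (p u) (p v) (p w) != 0.
  by move=> *; apply: gp.2.
have ba : b != a by rewrite eq_sym.
have dc : d != c by rewrite eq_sym.
have fc0 := nz a b c ab bc ac.
have fd0 := nz a b d ab bd ad.
have bcd0 := nz b c d bc cd bd.
have adc0 := nz a d c ad dc ac.
have bad0 := nz b a d ba ad bd.
have ebad : orient (p b) (p a) (p d) = - orient (p a) (p b) (p d) by rewrite /orient; ring.
have ebac : orient (p b) (p a) (p c) = - orient (p a) (p b) (p c) by rewrite /orient; ring.
case/sgn_split: (mulf_neq0 fc0 fd0) => h1.
  by exfalso; apply: (no_block gp ab ac ad bc bd cd (or_introl h1) la acB lb bdB).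
case/sgn_split: (mulf_neq0 fc0 bcd0) => h2; last first.
  by exfalso; apply: (no_block gp ab ac ad bc bd cd (or_intror (conj h1 h2)) la acB lb bdB).
case/sgn_split: (mulf_neq0 bad0 adc0) => h3; last first.
  have cnd : 0 < orient (p b) (p a) (p d) * orient (p b) (p a) (p c).
    by rewrite ebad ebac mulrNN mulrC.
  by exfalso; apply: (no_block gp ba bd bc ad ac dc (or_intror (conj cnd h3)) lb bdB la acB).
rewrite ebad in h3.
have e1 : orient (p b) (p d) (p c) = - orient (p b) (p c) (p d) by rewrite /orient; ring.
have e2 : orient (p d) (p c) (p a) = orient (p a) (p d) (p c) by rewrite /orient; ring.
have e3 : orient (p c) (p a) (p b) = orient (p a) (p b) (p c) by rewrite /orient; ring.
rewrite /convex_quad e1 e2 e3.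
by case/sgn_split: fc0 => hc; [right|left]; repeat split; nra.
Qed.
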